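(* Let $0<p<\frac12$, $\varepsilon=\frac12-p$, and let $k\ge1$. Suppose a fixed comparison query is asked $k$ times, each answer being independently correct with probability $1-p$ and the opposite with probability $p$; let $X$ be the number of ''$<$'' answers and $Y=k-X$ the number of ''$>$'' answers, and let $$R=\frac{(1-p)^Xp^Y+(1-p)^Yp^X}{2}.$$ Then for every constant $c>0$ there is a constant $C'$ such that whenever $k\le c\,\varepsilon^{-2}$, $$\mathbb{E}[R]\le\frac{1}{2^k}\left(1+C'\varepsilon^4k^2\right).$$ Equivalently, for an epoch of length $k=\mathcal{O}(\varepsilon^{-2})$ starting at step $\tau$, the coupled process satisfies $\mathbb{E}[W_{\tau+k}]\le 2^{-k}(1+\mathcal{O}(\varepsilon^4k^2))W_\tau$, where $W_{\tau+k}=W_\tau\cdot R$.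
   Context: Binary search with comparison queries on a linear order: querying $q$, the correct answer is ''$<$'' if the target is smaller than $q$ and ''$>$'' otherwise. The coupled process $W$ is updated at the end of an epoch (a block of $k$ repeated queries to the same element) starting at step $\tau$ by $W_{\tau+k}=W_\tau\frac{(1-p)^Xp^Y+(1-p)^Yp^X}{2}$, with $X,Y$ the numbers of ''$<$'' and ''$>$'' answers in the epoch. *)

(* Defs.v *)
From HB Require Import structures.
From mathcomp Require Import all_boot all_order all_algebra.
Set Implicit Arguments. Unset Strict Implicit. Unset Printing Implicit Defensive.
Import Order.TTheory GRing.Theory Num.Theory.
Local Open Scope ring_scope.

Definition epochR {R : realFieldType} (p : R) (x y : nat) : R :=
  ((1 - p) ^+ x * p ^+ y + (1 - p) ^+ y * p ^+ x) / 2.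

(* Expectation of epochR p X (k - X) when each of the k independent answers is
   "<" with probability a (so X ~ Binomial(k, a), Y = k - X). *)
Definition epoch_expect {R : realFieldType} (k : nat) (a p : R) : R :=
  \sum_(x < k.+1)
    'C(k, x)%:R * a ^+ x * (1 - a) ^+ (k - x) * epochR p x (k - x).

(* Main.v *)
Require Import Defs.
From HB Require Import structures.
From mathcomp Require Import all_boot all_order all_algebra.
From mathcomp Require Import ring lra.
Import Order.TTheory GRing.Theory Num.Theory.
Local Open Scope ring_scope.

Lemma closed_form (R : realFieldType) k (a p : R) :
  epoch_expect k a p =
  ((a * (1 - p) + (1 - a) * p) ^+ k + (a * p + (1 - a) * (1 - p)) ^+ k) / 2.
Proof.
rewrite /epoch_expect /epochR.
rewrite (addrC (a * (1 - p))) (addrC (a * p)) !exprDn -big_split /= mulr_suml.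
apply: eq_bigr => i _.
rewrite !exprMn -!mulrnDl -mulr_natl.
set C := 'C(k, i)%:R; set A := a ^+ i; set B := (1 - a) ^+ (k - i).
set P := (1 - p) ^+ i; set Q := p ^+ (k - i); set P' := (1 - p) ^+ (k - i).
set Q' := p ^+ i.
ring.
Qed.

Section Aux.
Variable R : realFieldType.
Implicit Types u : R.

Lemma LA u k : 0 <= u -> (1 + u) ^+ k - 1 <= k%:R * u * (1 + u) ^+ k.
Proof.
move=> u0; elim: k => [|k IH]; first by rewrite expr0 mul0r mul0r subrr.
have h1 : 1 <= (1 + u) ^+ k by apply: exprn_ege1; lra.
rewrite exprS -natr1.
set X := (1 + u) ^+ k in IH h1 *.
nra.
Qed.

Lemma LB u k : 0 <= u ->
  (1 + u) ^+ k <= 1 + k%:R * u + k%:R ^+ 2 * u ^+ 2 * (1 + u) ^+ k.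
Proof.
move=> u0; elim: k => [|k IH]; first by rewrite !expr0 !mul0r; lra.
have h1 : 1 <= (1 + u) ^+ k by apply: exprn_ege1; lra.
have hA := LA u k u0.
have k0 : 0 <= k%:R :> R by [].
rewrite exprS -natr1.
set X := (1 + u) ^+ k in IH h1 hA *.
set K := k%:R in IH hA k0 *.
have h2 : 0 <= u * K * u * X by rewrite !mulr_ge0 //; lra.
have h3 : 0 <= u * K * u * X * u by rewrite !mulr_ge0 //; lra.
have h4 : 0 <= K * u * u * X * u * K by rewrite !mulr_ge0 //; lra.
have h5 : 0 <= u * u * X * u  by rewrite !mulr_ge0 //; lra.
nra.
Qed.

Lemma LD u k : 0 <= u -> u <= 1 -> 1 - k%:R * u <= (1 - u) ^+ k.
Proof.
move=> u0 u1; elim: k => [|k IH]; first by rewrite expr0 mul0r subr0.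
rewrite exprS -natr1.
have k0 : 0 <= k%:R :> R by [].
set X := (1 - u) ^+ k in IH *.
set K := k%:R in IH k0 *.
have h : 0 <= K * u * u by rewrite !mulr_ge0.
nra.
Qed.

Lemma LC u k : 0 <= u -> u <= 1 ->
  (1 - u) ^+ k <= 1 - k%:R * u + k%:R ^+ 2 * u ^+ 2.
Proof.
move=> u0 u1; elim: k => [|k IH]; first by rewrite !expr0 !mul0r; lra.
have hD := LD u k u0 u1.
rewrite exprS -natr1.
have k0 : 0 <= k%:R :> R by [].
set X := (1 - u) ^+ k in IH hD *.
set K := k%:R in IH hD k0 *.
have h : 0 <= K * u * u by rewrite !mulr_ge0.
nra.
Qed.

Lemma LE u s : 0 <= u -> u <= 1 -> s%:R * u <= 1 / 2 -> (1 + u) ^+ s <= 2.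
Proof.
move=> u0 u1 hs.
have hD := LD u s u0 u1.
have hP : (1 + u) ^+ s * (1 - u) ^+ s <= 1.
  rewrite -exprMn; apply: exprn_ile1; nra.
have hX : 0 <= (1 + u) ^+ s by apply: exprn_ge0; lra.
nra.
Qed.

End Aux.

From Stdlib Require Import Classical.

Lemma LBound (R : realFieldType) (M : R) : 0 < M ->
  exists B : R, 1 <= B /\ forall (k : nat) (u : R), 0 <= u -> u <= 1 ->
    k%:R * u <= M -> (1 + u) ^+ k <= B.
Proof.
move=> M0.
case: (classic (exists N0 : nat, M <= N0%:R)) => [[N0 hN0]|hno].
- pose N := (4 * N0).+1.
  exists (2 ^+ N); split; first by apply: exprn_ege1; lra.
  move=> k u u0 u1 hk.
  have hN : N%:R = 4 * N0%:R + 1 :> R by rewrite /N -natr1 natrM.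
  have N0p : 0 <= N0%:R :> R by [].
  case: (lerP (1/4) u) => hu.
  + have hk4 : (k <= N)%N.
      rewrite -(ler_nat R) hN; have k0 : 0 <= k%:R :> R by [].
      nra.
    apply: (le_trans (y := 2 ^+ k)).
      apply: lerXn2r; rewrite ?nnegrE; lra.
    by apply: ler_weXn2l => //; lra.
  + pose s := (k %/ N).+1.
    have hks : (k <= s * N)%N by apply: ltnW; apply: ltn_ceil.
    have h1u : 1 <= 1 + u by lra.
    apply: (le_trans (y := (1 + u) ^+ (s * N))).
      by apply: ler_weXn2l.
    rewrite exprM.
    apply: lerXn2r; rewrite ?nnegrE; try lra.
      by apply: exprn_ge0; lra.
    apply: LE => //.
    have hd : ((k %/ N)%:R * N%:R <= k%:R :> R).
      by rewrite -natrM ler_nat leq_divM.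
    rewrite /s -natr1.
    set d := (k %/ N)%:R in hd *.
    have d0 : 0 <= d by [].
    rewrite hN in hd.
    have : d * u * (4 * N0%:R + 1) <= N0%:R by nra.
    nra.
- exists (M + 1); split; first lra.
  move=> k u u0 u1 hk.
  apply: (le_trans (y := 2 ^+ k)).
    apply: lerXn2r; rewrite ?nnegrE; lra.
  have : ~ (M <= (2 ^ k)%N%:R) by move=> h; apply: hno; exists (2 ^ k)%N.
  rewrite natrX => hn.
  have hlt : (2 ^+ k < M) by rewrite ltNge; apply/negP.
  lra.
Qed.

Theorem lemma9 (R : realFieldType) (c : R) :
  0 < c ->
  exists C' : R,
    forall (p : R) (k : nat),
      0 < p -> p < 1 / 2 ->
      (1 <= k)%N ->
      k%:R <= c / (1 / 2 - p) ^+ 2 ->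
      forall a : R, a = 1 - p \/ a = p ->
        epoch_expect k a p <=
          (1 + C' * (1 / 2 - p) ^+ 4 * (k%:R) ^+ 2) / 2 ^+ k.
Proof.
move=> c0.
have [B [B1 HB]] := @LBound R (4 * c) ltac:(lra).
exists (8 * (B + 1)) => p k p0 p1 k1 hk a ha.
set e := 1 / 2 - p.
have e0 : 0 < e by rewrite /e; lra.
pose u := 4 * e ^+ 2.
have u0 : 0 <= u by rewrite /u; apply: mulr_ge0 => //; apply: exprn_ge0; lra.
have u1 : u <= 1 by rewrite /u /e; nra.
have hke : k%:R * e ^+ 2 <= c.
  have e2 : 0 < e ^+ 2 by apply: exprn_gt0.
  by rewrite -ler_pdivlMr.
have hku : k%:R * u <= 4 * c by rewrite /u; lra.
have hX := HB k u u0 u1 hku.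
have hLB := @LB R u k u0.
have hLC := @LC R u k u0 u1.
have E1 : (1 - p) * (1 - p) + p * p = (1 + u) / 2 by rewrite /u /e; field.
have E2 : (1 - p) * p + p * (1 - p) = (1 - u) / 2 by rewrite /u /e; field.
have E3 : p * (1 - p) + (1 - p) * p = (1 - u) / 2 by rewrite /u /e; field.
have E4 : p * p + (1 - p) * (1 - p) = (1 + u) / 2 by rewrite /u /e; field.
have -> : epoch_expect k a p = ((1 + u) ^+ k + (1 - u) ^+ k) / 2 / 2 ^+ k.
  rewrite closed_form.
  have h2 : (2 : R) ^+ k != 0 by rewrite gt_eqF // exprn_gt0.
  have Hq : 1 - (1 - p) = p by ring.
  case: ha => ->; rewrite ?Hq ?E1 ?E2 ?E3 ?E4 !expr_div_n; field; exact: h2.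
apply: ler_wpM2r; first by rewrite invr_ge0 exprn_ge0.
have -> : 8 * (B + 1) * e ^+ 4 * k%:R ^+ 2 = (k%:R ^+ 2 * u ^+ 2) * (B + 1) / 2.
  by rewrite /u; field.
set K2 := k%:R ^+ 2 * u ^+ 2 in hLB hLC *.
have K0 : 0 <= K2 by rewrite /K2 mulr_ge0 // exprn_ge0.
have : K2 * (1 + u) ^+ k <= K2 * B by rewrite ler_wpM2l.
lra.
Qed.
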